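(* Let $\Gamma$ be a context, $x$ a variable that does not occur in $\Gamma$, and $\Gamma'$ a well-formed context such that $\Gamma' \subseteq (\Gamma, x:C)$ and $\Gamma' \vdash t:A$ is derivable in $\mathcal{T}'$. Then there exists a well-formed context $\Gamma''$ such that $\Gamma'', x:C \vdash t:A$ is derivable in $\mathcal{T}'$.
   Context: Fix a (functional) Pure type system: a set $\mathcal{S}$ of sorts, for each sort $s$ an infinite set $\mathcal{V}_s$ of variables (pairwise disjoint), a functional relation $\mathcal{A}\subseteq \mathcal{S}\times\mathcal{S}$ (axioms) and a functional relation $\mathcal{R}\subseteq\mathcal{S}\times\mathcal{S}\times\mathcal{S}$ (rules). Terms are $t ::= x \mid s \mid (x:A)\rightarrow B \mid \lambda x:A\,t \mid t\,u$, and $\equiv$ denotes ($\beta$-)conversion. A context is a finite sequence $x_1:A_1,\dots,x_n:A_n$ with pairwise distinct variables; $\Gamma\subseteq\Gamma'$ means every declaration $x:A$ of $\Gamma$ also occurs in $\Gamma'$. The usual system $\mathcal{T}$ has the rules: (sort) $\vdash s_1:s_2$ for $\langle s_1,s_2\rangle\in\mathcal{A}$ (empty context); (start) from $\Gamma\vdash A:s$ infer $\Gamma,x:A\vdash x:A$ for $x\in\mathcal{V}_s$; (weak) from $\Gamma\vdash t:A$ and $\Gamma\vdash B:s$ infer $\Gamma,x:B\vdash t:A$ for $x\in\mathcal{V}_s$; (prod) from $\Gamma\vdash A:s_1$ and $\Gamma,x:A\vdash B:s_2$ infer $\Gamma\vdash (x:A)\rightarrow B:s_3$ for $\langle s_1,s_2,s_3\rangle\in\mathcal{R}$;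 (abs) from $\Gamma\vdash A:s_1$, $\Gamma,x:A\vdash B:s_2$ and $\Gamma,x:A\vdash t:B$ infer $\Gamma\vdash\lambda x:A\,t:(x:A)\rightarrow B$ for $\langle s_1,s_2,s_3\rangle\in\mathcal{R}$; (app) from $\Gamma\vdash t:(x:A)\rightarrow B$ and $\Gamma\vdash u:A$ infer $\Gamma\vdash t\,u:(u/x)B$; (conv) from $\Gamma\vdash t:A$ and $\Gamma\vdash B:s$ infer $\Gamma\vdash t:B$ when $A\equiv B$. The system $\mathcal{T}'$ has the rules (prod), (abs), (app), (conv) as in $\mathcal{T}$ together with: (sort') $\Gamma\vdash s_1:s_2$ for any context $\Gamma$ and $\langle s_1,s_2\rangle\in\mathcal{A}$; (var') from $\Gamma,x:A,\Gamma'\vdash A:s$ infer $\Gamma,x:A,\Gamma'\vdash x:A$ for $x\in\mathcal{V}_s$; there is no weakening rule. Well-formed contexts are defined inductively: the empty context is well-formed, and if $\Gamma$ is well-formed and $\Gamma\vdash A:s$ is derivable in $\mathcal{T}$ for some sort $s$, then $\Gamma,x:A$ is well-formed. *)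

(* Defs.v *)
(* Pure type systems with sorted variables, in a
   locally-nameless representation (bound variables = de Bruijn indices,
   free variables = names). *)
From Stdlib Require Import List Arith Relations.
Import ListNotations.

(* Terms over sorts [Srt] and variables [Var].  A binder carries the sort
   class [k] of the bound variable (x ∈ V_k), since alpha-renaming keeps the
   class of a variable. *)
Inductive term (Srt Var : Type) : Type :=
| BVar : nat -> term Srt Var
| FVar : Var -> term Srt Var
| Sort : Srt -> term Srt Var
| Prod : Srt -> term Srt Var -> term Srt Var -> term Srt Var
| Lam  : Srt -> term Srt Var -> term Srt Var -> term Srt Var
| App  : term Srt Var -> term Srt Var -> term Srt Var.
Arguments BVar {Srt Var}. Arguments FVar {Srt Var}. Arguments Sort {Srt Var}.
Arguments Prod {Srt Var}. Arguments Lam {Srt Var}. Arguments App {Srt Var}.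

Fixpoint lift {Srt Var : Type} (n c : nat) (t : term Srt Var) : term Srt Var :=
  match t with
  | BVar i => if c <=? i then BVar (i + n) else BVar i
  | FVar x => FVar x
  | Sort s => Sort s
  | Prod k A B => Prod k (lift n c A) (lift n (S c) B)
  | Lam k A u => Lam k (lift n c A) (lift n (S c) u)
  | App u v => App (lift n c u) (lift n c v)
  end.

Fixpoint subst_rec {Srt Var : Type} (d : nat) (u t : term Srt Var) : term Srt Var :=
  match t with
  | BVar i => if i =? d then lift d 0 u
              else if d <? i then BVar (pred i) else BVar i
  | FVar x => FVar x
  | Sort s => Sort s
  | Prod k A B => Prod k (subst_rec d u A) (subst_rec (S d) u B)
  | Lam k A w => Lam k (subst_rec d u A) (subst_rec (S d) u w)
  | App w v => App (subst_rec d u w) (subst_rec d u v)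
  end.

Definition subst0 {Srt Var : Type} (B u : term Srt Var) : term Srt Var := subst_rec 0 u B.
Definition open {Srt Var : Type} (B : term Srt Var) (x : Var) : term Srt Var :=
  subst_rec 0 (FVar x) B.

Fixpoint occurs {Srt Var : Type} (x : Var) (t : term Srt Var) : Prop :=
  match t with
  | BVar _ => False
  | FVar y => y = x
  | Sort _ => False
  | Prod _ A B => occurs x A \/ occurs x B
  | Lam _ A u => occurs x A \/ occurs x u
  | App u v => occurs x u \/ occurs x v
  end.

Inductive beta {Srt Var : Type} : term Srt Var -> term Srt Var -> Prop :=
| beta_redex : forall k A t u, beta (App (Lam k A t) u) (subst0 t u)
| beta_prodL : forall k A A' B, beta A A' -> beta (Prod k A B) (Prod k A' B)
| beta_prodR : forall k A B B', beta B B' -> beta (Prod k A B) (Prod k A B')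
| beta_lamL : forall k A A' t, beta A A' -> beta (Lam k A t) (Lam k A' t)
| beta_lamR : forall k A t t', beta t t' -> beta (Lam k A t) (Lam k A t')
| beta_appL : forall t t' u, beta t t' -> beta (App t u) (App t' u)
| beta_appR : forall t u u', beta u u' -> beta (App t u) (App t u').

Definition conv {Srt Var : Type} : term Srt Var -> term Srt Var -> Prop :=
  clos_refl_sym_trans (term Srt Var) beta.

(* contexts: x1:A1, ..., xn:An as a list in this order; Γ,x:A = Γ ++ [(x,A)] *)
Definition ctx (Srt Var : Type) := list (Var * term Srt Var).
Definition dom {Srt Var : Type} (G : ctx Srt Var) : list Var := map fst G.
Definition is_context {Srt Var : Type} (G : ctx Srt Var) : Prop := NoDup (dom G).
Definition ctx_incl {Srt Var : Type} (G G' : ctx Srt Var) : Prop :=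
  forall d, In d G -> In d G'.
Definition occurs_ctx {Srt Var : Type} (x : Var) (G : ctx Srt Var) : Prop :=
  In x (dom G) \/ exists y A, In (y, A) G /\ occurs x A.

Section PTS.
Context {Srt Var : Type} (vclass : Var -> Srt)   (* x ∈ V_s  iff  vclass x = s *)
        (Ax : Srt -> Srt -> Prop) (Rl : Srt -> Srt -> Srt -> Prop).

Inductive typT : ctx Srt Var -> term Srt Var -> term Srt Var -> Prop :=
| T_sort : forall s1 s2, Ax s1 s2 -> typT [] (Sort s1) (Sort s2)
| T_start : forall G A s x, typT G A (Sort s) -> vclass x = s -> ~ In x (dom G) ->
    typT (G ++ [(x, A)]) (FVar x) A
| T_weak : forall G t A B s x, typT G t A -> typT G B (Sort s) -> vclass x = s ->
    ~ In x (dom G) -> typT (G ++ [(x, B)]) t A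
| T_prod : forall G k A B x s1 s2 s3, typT G A (Sort s1) ->
    typT (G ++ [(x, A)]) (open B x) (Sort s2) -> Rl s1 s2 s3 ->
    vclass x = k -> ~ In x (dom G) -> ~ occurs x B ->
    typT G (Prod k A B) (Sort s3)
| T_abs : forall G k A B t x s1 s2 s3, typT G A (Sort s1) ->
    typT (G ++ [(x, A)]) (open B x) (Sort s2) ->
    typT (G ++ [(x, A)]) (open t x) (open B x) -> Rl s1 s2 s3 ->
    vclass x = k -> ~ In x (dom G) -> ~ occurs x B -> ~ occurs x t ->
    typT G (Lam k A t) (Prod k A B)
| T_app : forall G t u k A B, typT G t (Prod k A B) -> typT G u A ->
    typT G (App t u) (subst0 B u)
| T_conv : forall G t A B s, typT G t A -> typT G B (Sort s) -> conv A B ->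
    typT G t B.

Inductive typT' : ctx Srt Var -> term Srt Var -> term Srt Var -> Prop :=
| T'_sort : forall G s1 s2, is_context G -> Ax s1 s2 -> typT' G (Sort s1) (Sort s2)
| T'_var : forall G1 G2 x A s, typT' (G1 ++ (x, A) :: G2) A (Sort s) -> vclass x = s ->
    typT' (G1 ++ (x, A) :: G2) (FVar x) A
| T'_prod : forall G k A B x s1 s2 s3, typT' G A (Sort s1) ->
    typT' (G ++ [(x, A)]) (open B x) (Sort s2) -> Rl s1 s2 s3 ->
    vclass x = k -> ~ In x (dom G) -> ~ occurs x B ->
    typT' G (Prod k A B) (Sort s3)
| T'_abs : forall G k A B t x s1 s2 s3, typT' G A (Sort s1) ->
    typT' (G ++ [(x, A)]) (open B x) (Sort s2) ->
    typT' (G ++ [(x, A)]) (open t x) (open B x) -> Rl s1 s2 s3 ->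
    vclass x = k -> ~ In x (dom G) -> ~ occurs x B -> ~ occurs x t ->
    typT' G (Lam k A t) (Prod k A B)
| T'_app : forall G t u k A B, typT' G t (Prod k A B) -> typT' G u A ->
    typT' G (App t u) (subst0 B u)
| T'_conv : forall G t A B s, typT' G t A -> typT' G B (Sort s) -> conv A B ->
    typT' G t B.

Inductive wf_ctx : ctx Srt Var -> Prop :=
| wf_nil : wf_ctx []
| wf_snoc : forall G x A s, wf_ctx G -> typT G A (Sort s) -> ~ In x (dom G) ->
    wf_ctx (G ++ [(x, A)]).

End PTS.

Definition pts_spec {Srt Var : Type} (vclass : Var -> Srt)
  (Ax : Srt -> Srt -> Prop) (Rl : Srt -> Srt -> Srt -> Prop) : Prop :=
  (* each V_s is infinite *)
  (forall (s : Srt) (l : list Var), exists x, vclass x = s /\ ~ In x l) /\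
  (forall s s1 s2, Ax s s1 -> Ax s s2 -> s1 = s2) /\
  (forall s1 s2 s3 s3', Rl s1 s2 s3 -> Rl s1 s2 s3' -> s3 = s3').

(* Main.v *)
Require Import Defs.
From Stdlib Require Import List Arith Relations Permutation Classical ClassicalEpsilon Lia.
Import ListNotations.


Section Aux.
Context {Srt Var : Type}.

Fixpoint ren (f : Var -> Var) (t : term Srt Var) : term Srt Var :=
  match t with
  | BVar i => BVar i
  | FVar y => FVar (f y)
  | Sort s => Sort s
  | Prod k A B => Prod k (ren f A) (ren f B)
  | Lam k A u => Lam k (ren f A) (ren f u)
  | App u v => App (ren f u) (ren f v)
  end.
Definition renc (f : Var -> Var) (G : ctx Srt Var) : ctx Srt Var :=
  map (fun d => (f (fst d), ren f (snd d))) G.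

Lemma renc_app f G H : renc f (G ++ H) = renc f G ++ renc f H.
Proof. unfold renc; apply map_app. Qed.
Lemma renc_cons f x A G : renc f ((x, A) :: G) = (f x, ren f A) :: renc f G.
Proof. reflexivity. Qed.
Lemma renc_nil f : renc f [] = [].
Proof. reflexivity. Qed.
Lemma dom_renc f G : dom (renc f G) = map f (dom G).
Proof. unfold dom, renc; rewrite !map_map; reflexivity. Qed.
Lemma dom_app (G H : ctx Srt Var) : dom (G ++ H) = dom G ++ dom H.
Proof. unfold dom; apply map_app. Qed.

Lemma ren_lift f n c t : ren f (lift n c t) = lift n c (ren f t).
Proof.
  revert c; induction t as [i|y|s|k A IHA B IHB|k A IHA u IHu|u IHu v IHv]; intros c; simpl.
  1: destruct (c <=? i); reflexivity.
  all: f_equal; auto.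
Qed.

Lemma ren_subst f d u t : ren f (subst_rec d u t) = subst_rec d (ren f u) (ren f t).
Proof.
  revert d; induction t as [i|y|s|k A IHA B IHB|k A IHA w IHw|w IHw v IHv]; intros d; simpl.
  1: destruct (i =? d); [apply ren_lift|destruct (d <? i); reflexivity].
  all: f_equal; auto.
Qed.

Lemma ren_open f B x : ren f (open B x) = open (ren f B) (f x).
Proof. unfold open; apply ren_subst. Qed.

Lemma ren_beta f t u : beta t u -> beta (ren f t) (ren f u).
Proof.
  induction 1; simpl.
  1: unfold subst0; rewrite ren_subst; exact (beta_redex _ _ _ _).
  all: constructor; auto.
Qed.

Lemma ren_conv f t u : conv t u -> conv (ren f t) (ren f u).
Proof.
  induction 1.
  - apply rst_step; apply ren_beta; auto.
  - apply rst_refl.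
  - apply rst_sym; auto.
  - eapply rst_trans; eauto.
Qed.

Lemma occurs_ren_inv f (Hf : forall a b, f a = f b -> a = b) v t :
  occurs (f v) (ren f t) -> occurs v t.
Proof. induction t; simpl; intuition. Qed.

Lemma ren_id f t : (forall v, occurs v t -> f v = v) -> ren f t = t.
Proof.
  induction t; simpl; intros H; f_equal; auto.
Qed.

Lemma occurs_lift (v : Var) n c (t : term Srt Var) : occurs v (lift n c t) -> occurs v t.
Proof.
  revert c; induction t as [i|y|s|k A IHA B IHB|k A IHA u IHu|u IHu w IHw]; intros c; simpl.
  1: destruct (c <=? i); simpl; auto.
  all: intuition eauto.
Qed.

Lemma occurs_subst_inv (v : Var) d (u t : term Srt Var) : occurs v (subst_rec d u t) -> occurs v t \/ occurs v u.
Proof.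
  revert d; induction t as [i|y|s|k A IHA B IHB|k A IHA w IHw|w IHw z IHz]; intros d; simpl.
  1: destruct (i =? d); [intros H; right; eapply occurs_lift; eauto | destruct (d <? i); simpl; tauto].
  all: try tauto.
  - intros [H|H]; [destruct (IHA d H)|destruct (IHB (S d) H)]; tauto.
  - intros [H|H]; [destruct (IHA d H)|destruct (IHw (S d) H)]; tauto.
  - intros [H|H]; [destruct (IHw d H)|destruct (IHz d H)]; tauto.
Qed.

Lemma occurs_subst (v : Var) d (u t : term Srt Var) : occurs v t -> occurs v (subst_rec d u t).
Proof.
  revert d; induction t; intros d; simpl; intuition.
Qed.

Fixpoint fvl (t : term Srt Var) : list Var :=
  match t with
  | BVar _ => [] | FVar y => [y] | Sort _ => []
  | Prod _ A B => fvl A ++ fvl B | Lam _ A u => fvl A ++ fvl u | App u v => fvl u ++ fvl v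
  end.
Lemma occurs_fvl (v : Var) (t : term Srt Var) : occurs v t -> In v (fvl t).
Proof. induction t; simpl; intros; rewrite ?in_app_iff; intuition. Qed.
Definition fvc (G : ctx Srt Var) : list Var := flat_map (fun d => fst d :: fvl (snd d)) G.
Lemma occurs_ctx_fvc (v : Var) (G : ctx Srt Var) : occurs_ctx v G -> In v (fvc G).
Proof.
  unfold occurs_ctx, dom, fvc; intros [H|(y&A&H1&H2)]; apply in_flat_map.
  - apply in_map_iff in H; destruct H as (d&<-&Hd). exists d; simpl; auto.
  - exists (y,A); simpl; split; auto; right; apply occurs_fvl; auto.
Qed.

Definition swapv (a b v : Var) : Var :=
  if excluded_middle_informative (v = a) then b
  else if excluded_middle_informative (v = b) then a else v.
Lemma swapv_inj a b u v : swapv a b u = swapv a b v -> u = v.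
Proof. unfold swapv; repeat destruct excluded_middle_informative; congruence. Qed.
Lemma swapv_l a b : swapv a b a = b.
Proof. unfold swapv; destruct excluded_middle_informative; congruence. Qed.
Lemma swapv_other a b v : v <> a -> v <> b -> swapv a b v = v.
Proof. unfold swapv; repeat destruct excluded_middle_informative; congruence. Qed.

End Aux.


Section Typ.
Context {Srt Var : Type} (vclass : Var -> Srt)
        (Ax : Srt -> Srt -> Prop) (Rl : Srt -> Srt -> Srt -> Prop).

Inductive typH : nat -> ctx Srt Var -> term Srt Var -> term Srt Var -> Prop :=
| H_sort : forall n G s1 s2, is_context G -> Ax s1 s2 -> typH n G (Sort s1) (Sort s2)
| H_var : forall n G1 G2 x A s, typH n (G1 ++ (x, A) :: G2) A (Sort s) -> vclass x = s ->
    typH (S n) (G1 ++ (x, A) :: G2) (FVar x) A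
| H_prod : forall n G k A B x s1 s2 s3, typH n G A (Sort s1) ->
    typH n (G ++ [(x, A)]) (open B x) (Sort s2) -> Rl s1 s2 s3 ->
    vclass x = k -> ~ In x (dom G) -> ~ occurs x B ->
    typH (S n) G (Prod k A B) (Sort s3)
| H_abs : forall n G k A B t x s1 s2 s3, typH n G A (Sort s1) ->
    typH n (G ++ [(x, A)]) (open B x) (Sort s2) ->
    typH n (G ++ [(x, A)]) (open t x) (open B x) -> Rl s1 s2 s3 ->
    vclass x = k -> ~ In x (dom G) -> ~ occurs x B -> ~ occurs x t ->
    typH (S n) G (Lam k A t) (Prod k A B)
| H_app : forall n G t u k A B, typH n G t (Prod k A B) -> typH n G u A ->
    typH (S n) G (App t u) (subst0 B u)
| H_conv : forall n G t A B s, typH n G t A -> typH n G B (Sort s) -> conv A B ->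
    typH (S n) G t B.

Lemma typH_mono n G t T : typH n G t T -> forall m, n <= m -> typH m G t T.
Proof.
  induction 1; intros m Hm;
    try (destruct m as [|m]; [lia|]); econstructor; eauto using le_S_n.
Qed.

Lemma typT'_H G t T : typT' vclass Ax Rl G t T -> exists n, typH n G t T.
Proof.
  induction 1.
  - exists 0; constructor; auto.
  - destruct IHtypT' as [n Hn]; exists (S n); econstructor; eauto.
  - destruct IHtypT'1 as [n1 Hn1]; destruct IHtypT'2 as [n2 Hn2].
    exists (S (max n1 n2)); econstructor; eauto; eapply typH_mono; eauto; lia.
  - destruct IHtypT'1 as [n1 Hn1]; destruct IHtypT'2 as [n2 Hn2]; destruct IHtypT'3 as [n3 Hn3].
    exists (S (max n1 (max n2 n3))); econstructor; eauto; eapply typH_mono; eauto; lia.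
  - destruct IHtypT'1 as [n1 Hn1]; destruct IHtypT'2 as [n2 Hn2].
    exists (S (max n1 n2)); econstructor; eauto; eapply typH_mono; eauto; lia.
  - destruct IHtypT'1 as [n1 Hn1]; destruct IHtypT'2 as [n2 Hn2].
    exists (S (max n1 n2)); econstructor; eauto; eapply typH_mono; eauto; lia.
Qed.

Lemma typH_T' n G t T : typH n G t T -> typT' vclass Ax Rl G t T.
Proof. induction 1; econstructor; eauto. Qed.

Lemma nodup_map_inj (f : Var -> Var) (Hf : forall a b, f a = f b -> a = b) l :
  NoDup l -> NoDup (map f l).
Proof.
  induction 1; simpl; constructor; auto.
  intros Hin; apply in_map_iff in Hin; destruct Hin as (y&Hy&Hin).
  apply Hf in Hy; subst; auto.
Qed.

Lemma in_map_inj (f : Var -> Var) (Hf : forall a b, f a = f b -> a = b) x l :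
  In (f x) (map f l) -> In x l.
Proof. intros H; apply in_map_iff in H; destruct H as (y&Hy&Hin); apply Hf in Hy; subst; auto. Qed.

Section Ren.
Variable f : Var -> Var.
Hypothesis Hf : forall a b, f a = f b -> a = b.
Hypothesis Hc : forall v, vclass (f v) = vclass v.

Lemma ren_typH n G t T : typH n G t T -> typH n (renc f G) (ren f t) (ren f T).
Proof.
  induction 1 as [n G s1 s2 Hctx Hax
    | n G1 G2 x A s HA IHA Hcl
    | n G k A B x s1 s2 s3 HA IHA HB IHB Hr Hcl Hdom Hocc
    | n G k A B t x s1 s2 s3 HA IHA HB IHB Ht IHt Hr Hcl Hdom HoccB Hocct
    | n G t u k A B Ht IHt Hu IHu
    | n G t A B s Ht IHt HB IHB Hcv]; simpl in *.
  - apply H_sort; auto. unfold is_context in *; rewrite dom_renc; apply nodup_map_inj; auto.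
  - rewrite renc_app, renc_cons in *. apply H_var with (s := s); auto. rewrite Hc; auto.
  - rewrite renc_app, ren_open in IHB. simpl in IHB.
    eapply H_prod with (x := f x); eauto.
    + rewrite Hc; auto.
    + rewrite dom_renc; intro Hin; apply Hdom; eapply in_map_inj; eauto.
    + intro Ho; apply Hocc; eapply occurs_ren_inv; eauto.
  - rewrite renc_app, !ren_open in *. simpl in *.
    eapply H_abs with (x := f x); eauto.
    + rewrite Hc; auto.
    + rewrite dom_renc; intro Hin; apply Hdom; eapply in_map_inj; eauto.
    + intro Ho; apply HoccB; eapply occurs_ren_inv; eauto.
    + intro Ho; apply Hocct; eapply occurs_ren_inv; eauto.
  - unfold subst0; rewrite ren_subst. eapply H_app; eauto.
  - eapply H_conv; eauto. apply ren_conv; auto.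
Qed.

Lemma ren_typT G t T : typT vclass Ax Rl G t T -> typT vclass Ax Rl (renc f G) (ren f t) (ren f T).
Proof.
  induction 1 as [s1 s2 Hax
    | G A s x HA IHA Hcl Hdom
    | G t A B s x Ht IHt HB IHB Hcl Hdom
    | G k A B x s1 s2 s3 HA IHA HB IHB Hr Hcl Hdom Hocc
    | G k A B t x s1 s2 s3 HA IHA HB IHB Ht IHt Hr Hcl Hdom HoccB Hocct
    | G t u k A B Ht IHt Hu IHu
    | G t A B s Ht IHt HB IHB Hcv]; simpl in *.
  - constructor; auto.
  - rewrite renc_app; simpl. eapply T_start; eauto.
    + rewrite Hc; auto.
    + rewrite dom_renc; intro Hin; apply Hdom; eapply in_map_inj; eauto.
  - rewrite renc_app; simpl. eapply T_weak; eauto.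
    + rewrite Hc; auto.
    + rewrite dom_renc; intro Hin; apply Hdom; eapply in_map_inj; eauto.
  - rewrite renc_app, ren_open in IHB. simpl in IHB.
    eapply T_prod with (x := f x); eauto.
    + rewrite Hc; auto.
    + rewrite dom_renc; intro Hin; apply Hdom; eapply in_map_inj; eauto.
    + intro Ho; apply Hocc; eapply occurs_ren_inv; eauto.
  - rewrite renc_app, !ren_open in *. simpl in *.
    eapply T_abs with (x := f x); eauto.
    + rewrite Hc; auto.
    + rewrite dom_renc; intro Hin; apply Hdom; eapply in_map_inj; eauto.
    + intro Ho; apply HoccB; eapply occurs_ren_inv; eauto.
    + intro Ho; apply Hocct; eapply occurs_ren_inv; eauto.
  - unfold subst0; rewrite ren_subst. eapply T_app; eauto.
  - eapply T_conv; eauto. apply ren_conv; auto.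
Qed.

Lemma ren_wf G : wf_ctx vclass Ax Rl G -> wf_ctx vclass Ax Rl (renc f G).
Proof.
  induction 1.
  - constructor.
  - rewrite renc_app; simpl. econstructor; eauto.
    + apply (ren_typT _ _ _ H0).
    + rewrite dom_renc; intro Hin; apply H1; eapply in_map_inj; eauto.
Qed.
End Ren.

Lemma perm_typ G t T : typT' vclass Ax Rl G t T -> forall H, Permutation G H -> typT' vclass Ax Rl H t T.
Proof.
  induction 1 as [G s1 s2 Hctx Hax
    | G1 G2 x A s HA IHA Hcl
    | G k A B x s1 s2 s3 HA IHA HB IHB Hr Hcl Hdom Hocc
    | G k A B t x s1 s2 s3 HA IHA HB IHB Ht IHt Hr Hcl Hdom HoccB Hocct
    | G t u k A B Ht IHt Hu IHu
    | G t A B s Ht IHt HB IHB Hcv]; intros H' Hp.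
  - apply T'_sort; auto. unfold is_context, dom in *.
    eapply Permutation_NoDup; [apply Permutation_map; exact Hp| assumption].
  - assert (Hin: In (x,A) H') by (eapply Permutation_in; [exact Hp| apply in_elt]).
    apply in_split in Hin. destruct Hin as (H1 & H2 & ->).
    apply T'_var with (s := s); auto.
  - eapply T'_prod; eauto. apply IHB; apply Permutation_app_tail; auto.
    intro Hin; apply Hdom; eapply Permutation_in; [symmetry; apply Permutation_map; eauto | eauto].
  - eapply T'_abs; eauto. apply IHB; apply Permutation_app_tail; auto.
    apply IHt; apply Permutation_app_tail; auto.
    intro Hin; apply Hdom; eapply Permutation_in; [symmetry; apply Permutation_map; eauto | eauto].
  - eapply T'_app; eauto.
  - eapply T'_conv; eauto.
Qed.

Lemma fv_bind (G : ctx Srt Var) (x : Var) (A B : term Srt Var) (v : Var) :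
  (forall v, occurs v (open B x) -> In v (dom (G ++ [(x, A)]))) -> ~ occurs x B -> occurs v B -> In v (dom G).
Proof.
  intros H Hx Hv. specialize (H v (occurs_subst _ _ _ _ Hv)).
  rewrite dom_app, in_app_iff in H; simpl in H. destruct H as [H|[H|[]]]; auto.
  subst; contradiction.
Qed.

Lemma fv_typ G t T : typT' vclass Ax Rl G t T ->
  (forall v, occurs v t -> In v (dom G)) /\ (forall v, occurs v T -> In v (dom G)).
Proof.
  induction 1 as [G s1 s2 Hctx Hax
    | G1 G2 x A s HA IHA Hcl
    | G k A B x s1 s2 s3 HA IHA HB IHB Hr Hcl Hdom Hocc
    | G k A B t x s1 s2 s3 HA IHA HB IHB Ht IHt Hr Hcl Hdom HoccB Hocct
    | G t u k A B Ht IHt Hu IHu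
    | G t A B s Ht IHt HB IHB Hcv]; split; intros v Hv; simpl in Hv; try contradiction.
  - subst. unfold dom; rewrite map_app, in_app_iff; simpl; auto.
  - apply (proj1 IHA); auto.
  - destruct Hv as [Hv|Hv]; [apply (proj1 IHA); auto| eapply fv_bind; [apply (proj1 IHB) | auto | auto]].
  - destruct Hv as [Hv|Hv]; [apply (proj1 IHA); auto| eapply fv_bind; [apply (proj1 IHt) | auto | auto]].
  - destruct Hv as [Hv|Hv]; [apply (proj1 IHA); auto| eapply fv_bind; [apply (proj1 IHB) | auto | auto]].
  - destruct Hv as [Hv|Hv]; [apply (proj1 IHt); auto| apply (proj1 IHu); auto].
  - unfold subst0 in Hv. apply occurs_subst_inv in Hv. destruct Hv as [Hv|Hv].
    + apply (proj2 IHt); simpl; auto.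
    + apply (proj1 IHu); auto.
  - apply (proj1 IHt); auto.
  - apply (proj1 IHB); auto.
Qed.

End Typ.


Section W.
Context {Srt Var : Type} (vclass : Var -> Srt)
        (Ax : Srt -> Srt -> Prop) (Rl : Srt -> Srt -> Srt -> Prop).

Lemma occurs_ctx_app_inv (v : Var) (G H : ctx Srt Var) :
  occurs_ctx v (G ++ H) -> occurs_ctx v G \/ occurs_ctx v H.
Proof.
  unfold occurs_ctx; rewrite dom_app, in_app_iff.
  intros [[H1|H1]|(y&A&H1&H2)]; auto.
  apply in_app_iff in H1; destruct H1; [left|right]; right; eauto.
Qed.

Lemma occurs_ctx_one (v z : Var) (A : term Srt Var) :
  occurs_ctx v [(z, A)] -> v = z \/ occurs v A.
Proof.
  unfold occurs_ctx, dom; simpl. intros [[H|[]]|(y&B&[H|[]]&H2)]; auto.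
  inversion H; subst; auto.
Qed.

Lemma not_occ_ext (x z : Var) (G : ctx Srt Var) A :
  ~ occurs_ctx x G -> x <> z -> ~ occurs x A -> ~ occurs_ctx x (G ++ [(z, A)]).
Proof.
  intros H1 H2 H3 H. apply occurs_ctx_app_inv in H; destruct H as [H|H]; auto.
  apply occurs_ctx_one in H; tauto.
Qed.

Lemma nodup_snoc (l : list Var) x : NoDup l -> ~ In x l -> NoDup (l ++ [x]).
Proof.
  intros H1 H2. eapply Permutation_NoDup; [apply Permutation_cons_append|]. constructor; auto.
Qed.

Lemma renc_id (f : Var -> Var) (G : ctx Srt Var) :
  (forall v, occurs_ctx v G -> f v = v) -> renc f G = G.
Proof.
  induction G as [|[y B] G IH]; intros H; auto.
  rewrite renc_cons. f_equal.
  - f_equal.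
    + apply H; left; simpl; auto.
    + apply ren_id; intros v Hv; apply H; right; exists y, B; simpl; auto.
  - apply IH; intros v Hv; apply H. destruct Hv as [Hv|(z&C&H1&H2)].
    + left; simpl; auto.
    + right; exists z, C; simpl; auto.
Qed.

Lemma perm_swap_last (G : ctx Srt Var) a b :
  Permutation ((G ++ [a]) ++ [b]) ((G ++ [b]) ++ [a]).
Proof. rewrite <- !app_assoc; apply Permutation_app_head; simpl; apply perm_swap. Qed.

Definition WIH n := forall G t T, typH vclass Ax Rl n G t T -> forall x D,
  ~ occurs_ctx x G -> typT' vclass Ax Rl (G ++ [(x, D)]) t T.

Lemma ext_z n (IH : WIH n) G x D z A u U :
  ~ occurs_ctx x G -> ~ occurs x A -> z <> x ->
  typH vclass Ax Rl n (G ++ [(z, A)]) u U ->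
  typT' vclass Ax Rl ((G ++ [(x, D)]) ++ [(z, A)]) u U.
Proof.
  intros H1 H2 H3 H. eapply perm_typ; [| apply perm_swap_last].
  apply IH; auto. apply not_occ_ext; auto.
Qed.

Lemma ext_x n (IH : WIH n) G x D w A u U :
  ~ occurs_ctx x G -> ~ occurs x A -> w <> x -> vclass w = vclass x ->
  ~ occurs_ctx w G -> ~ occurs w A ->
  typH vclass Ax Rl n (G ++ [(x, A)]) u U ->
  typT' vclass Ax Rl ((G ++ [(x, D)]) ++ [(w, A)]) (ren (swapv x w) u) (ren (swapv x w) U).
Proof.
  intros H1 H2 H3 H4 H5 H6 H.
  apply (ren_typH vclass Ax Rl (swapv x w)) in H.
  - rewrite renc_app, renc_cons, renc_nil, swapv_l in H.
    rewrite (ren_id _ A) in H.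
    2:{ intros v Hv; apply swapv_other; intro; subst; auto. }
    rewrite (renc_id _ G) in H.
    2:{ intros v Hv; apply swapv_other; intro; subst; auto. }
    eapply ext_z; eauto.
  - apply swapv_inj.
  - intros v; unfold swapv; repeat destruct excluded_middle_informative; subst; auto.
Qed.

Lemma weak_aux (Hinf : forall s l, exists x, vclass x = s /\ ~ In x l) :
  forall N n G t T, n < N -> typH vclass Ax Rl n G t T -> forall x D,
  ~ occurs_ctx x G -> typT' vclass Ax Rl (G ++ [(x, D)]) t T.
Proof.
  induction N as [|N IHN]; intros n G t T Hn HT x D Hx; [lia|].
  destruct HT as [n G s1 s2 Hctx Hax
    | n G1 G2 y A s HA Hcl
    | n G k A B z s1 s2 s3 HA HB Hr Hcl Hdom Hocc
    | n G k A B t z s1 s2 s3 HA HB Ht Hr Hcl Hdom HoccB Hocct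
    | n G t u k A B Ht Hu
    | n G t A B s Ht HB Hcv].
  - apply T'_sort; auto. unfold is_context in *. rewrite dom_app; simpl.
    apply nodup_snoc; auto. intro; apply Hx; left; auto.
  - assert (IH : WIH n) by (intros ? ? ? ?; apply IHN with n; [lia|auto]).
    rewrite <- app_assoc; simpl. apply T'_var with (s := s); auto.
    rewrite app_comm_cons, app_assoc. apply IH; auto.
  - assert (IH : WIH n) by (intros ? ? ? ?; apply IHN with n; [lia|auto]).
    assert (HxA : ~ occurs x A).
    { intro Ho. apply (proj1 (fv_typ _ _ _ _ _ _ (typH_T' _ _ _ _ _ _ _ HA))) in Ho.
      apply Hx; left; auto. }
    destruct (classic (z = x)) as [->|Hzx].
    + destruct (Hinf k (x :: fvc G ++ fvl A ++ fvl B)) as (w & Hw & Hwn).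
      simpl in Hwn; rewrite !in_app_iff in Hwn.
      assert (Hw1 : w <> x) by (intro; subst; tauto).
      assert (Hw2 : ~ occurs_ctx w G) by (intro Ho; apply occurs_ctx_fvc in Ho; tauto).
      assert (Hw3 : ~ occurs w A) by (intro Ho; apply occurs_fvl in Ho; tauto).
      assert (Hw4 : ~ occurs w B) by (intro Ho; apply occurs_fvl in Ho; tauto).
      pose proof (ext_x n IH G x D w A _ _ Hx HxA Hw1 ltac:(congruence) Hw2 Hw3 HB) as HB'.
      rewrite ren_open, swapv_l in HB'. simpl in HB'.
      rewrite (ren_id _ B) in HB'.
      2:{ intros v Hv; apply swapv_other; intro; subst; auto. }
      eapply T'_prod with (x := w); eauto.
      rewrite dom_app; simpl; rewrite in_app_iff; simpl.
      intros [Hi|[Hi|[]]]; auto. apply Hw2; left; auto.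
    + eapply T'_prod with (x := z); eauto.
      * eapply ext_z; eauto.
      * rewrite dom_app; simpl; rewrite in_app_iff; simpl.
        intros [Hi|[Hi|[]]]; auto.
  - assert (IH : WIH n) by (intros ? ? ? ?; apply IHN with n; [lia|auto]).
    assert (HxA : ~ occurs x A).
    { intro Ho. apply (proj1 (fv_typ _ _ _ _ _ _ (typH_T' _ _ _ _ _ _ _ HA))) in Ho.
      apply Hx; left; auto. }
    destruct (classic (z = x)) as [->|Hzx].
    + destruct (Hinf k (x :: fvc G ++ fvl A ++ fvl B ++ fvl t)) as (w & Hw & Hwn).
      simpl in Hwn; rewrite !in_app_iff in Hwn.
      assert (Hw1 : w <> x) by (intro; subst; tauto).
      assert (Hw2 : ~ occurs_ctx w G) by (intro Ho; apply occurs_ctx_fvc in Ho; tauto).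
      assert (Hw3 : ~ occurs w A) by (intro Ho; apply occurs_fvl in Ho; tauto).
      assert (Hw4 : ~ occurs w B) by (intro Ho; apply occurs_fvl in Ho; tauto).
      assert (Hw5 : ~ occurs w t) by (intro Ho; apply occurs_fvl in Ho; tauto).
      pose proof (ext_x n IH G x D w A _ _ Hx HxA Hw1 ltac:(congruence) Hw2 Hw3 HB) as HB'.
      pose proof (ext_x n IH G x D w A _ _ Hx HxA Hw1 ltac:(congruence) Hw2 Hw3 Ht) as Ht'.
      rewrite ren_open, swapv_l in HB', Ht'. simpl in HB'. rewrite ren_open, swapv_l in Ht'.
      rewrite (ren_id _ B) in HB' by (intros v Hv; apply swapv_other; intro; subst; auto).
      rewrite (ren_id _ B) in Ht' by (intros v Hv; apply swapv_other; intro; subst; auto).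
      rewrite (ren_id _ t) in Ht' by (intros v Hv; apply swapv_other; intro; subst; auto).
      eapply T'_abs with (x := w); eauto.
      rewrite dom_app; simpl; rewrite in_app_iff; simpl.
      intros [Hi|[Hi|[]]]; auto. apply Hw2; left; auto.
    + eapply T'_abs with (x := z); eauto.
      * eapply ext_z; eauto.
      * eapply ext_z; eauto.
      * rewrite dom_app; simpl; rewrite in_app_iff; simpl.
        intros [Hi|[Hi|[]]]; auto.
  - assert (IH : WIH n) by (intros ? ? ? ?; apply IHN with n; [lia|auto]).
    eapply T'_app; eauto.
  - assert (IH : WIH n) by (intros ? ? ? ?; apply IHN with n; [lia|auto]).
    eapply T'_conv; eauto.
Qed.

Lemma weakening (Hinf : forall s l, exists x, vclass x = s /\ ~ In x l) G t T x D :
  typT' vclass Ax Rl G t T -> ~ occurs_ctx x G -> typT' vclass Ax Rl (G ++ [(x, D)]) t T.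
Proof.
  intros H Hx. apply typT'_H in H. destruct H as [n H].
  eapply weak_aux; eauto.
Qed.

Lemma wf_is_context G : wf_ctx vclass Ax Rl G -> is_context G.
Proof.
  induction 1; unfold is_context in *; simpl; [constructor|].
  rewrite dom_app; simpl; apply nodup_snoc; auto.
Qed.

Lemma occurs_ctx_incl (v : Var) (L M : ctx Srt Var) :
  ctx_incl L M -> occurs_ctx v L -> occurs_ctx v M.
Proof.
  unfold occurs_ctx, ctx_incl, dom; intros Hi [H|(y&A&H1&H2)].
  - left. apply in_map_iff in H; destruct H as (d&<-&Hd). apply in_map; auto.
  - right; exists y, A; auto.
Qed.

End W.


Theorem mainTheorem6 (Srt Var : Type) (vclass : Var -> Srt)
  (Ax : Srt -> Srt -> Prop) (Rl : Srt -> Srt -> Srt -> Prop)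
  (G : ctx Srt Var) (x : Var) (C : term Srt Var) (G' : ctx Srt Var)
  (t A : term Srt Var) :
  pts_spec vclass Ax Rl ->
  is_context G ->
  ~ occurs_ctx x G ->
  wf_ctx vclass Ax Rl G' ->
  ctx_incl G' (G ++ [(x, C)]) ->
  typT' vclass Ax Rl G' t A ->
  exists G'' : ctx Srt Var,
    wf_ctx vclass Ax Rl G'' /\ typT' vclass Ax Rl (G'' ++ [(x, C)]) t A.
Proof.
  intros [Hinf _] HG Hx Hwf Hincl HT.
  destruct (classic (In x (dom G'))) as [Hin|Hnin].
  -
    assert (HxC : In (x, C) G').
    { unfold dom in Hin; apply in_map_iff in Hin. destruct Hin as ([y D] & Hy & HyD).
      simpl in Hy; subst y. pose proof (Hincl _ HyD) as H.
      apply in_app_iff in H; destruct H as [H|[H|[]]].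
      - exfalso; apply Hx; left; unfold dom; apply in_map_iff; exists (x, D); auto.
      - inversion H; subst; auto. }
    apply in_split in HxC. destruct HxC as (G1 & G2 & HG').
    pose proof (wf_is_context _ _ _ _ Hwf) as Hctx.
    unfold is_context in Hctx. rewrite HG', dom_app in Hctx; simpl in Hctx.
    apply NoDup_remove_2 in Hctx.
    destruct (Hinf (vclass x) (x :: fvc G')) as (w & Hw & Hwn).
    assert (Hw1 : w <> x) by (intro; subst; apply Hwn; left; auto).
    assert (Hw2 : ~ occurs_ctx w G') by (intro Ho; apply occurs_ctx_fvc in Ho; apply Hwn; right; auto).
    assert (Hfix : forall L, (forall d, In d L -> In d G1 \/ In d G2) ->
                   renc (swapv x w) L = L).
    { intros L HL. apply renc_id. intros v Hv. apply swapv_other.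
      - intro Heq; rewrite Heq in Hv; clear Heq. destruct Hv as [Hv|(y&B&H1&H2)].
        + unfold dom in Hv; apply in_map_iff in Hv. destruct Hv as ([y B] & Hy & HyB).
          simpl in Hy; subst y. apply Hctx. rewrite in_app_iff.
          destruct (HL _ HyB) as [H|H]; [left|right]; unfold dom; apply in_map_iff;
            exists (x, B); auto.
        + assert (HyG : In (y, B) G).
          { assert (Hd : In (y, B) G') by (rewrite HG'; destruct (HL _ H1) as [H|H];
              apply in_app_iff; [left|right; right]; auto).
            apply Hincl in Hd. apply in_app_iff in Hd. destruct Hd as [Hd|[Hd|[]]]; auto.
            injection Hd as Hd1 Hd2; subst y C. exfalso; apply Hctx. rewrite in_app_iff.
            destruct (HL _ H1) as [H|H]; [left|right]; unfold dom; apply in_map_iff;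
              exists (x, B); auto. }
          apply Hx; right; exists y, B; auto.
      - intro Heq; rewrite Heq in Hv; clear Heq. apply Hw2. eapply occurs_ctx_incl; [|exact Hv].
        intros d Hd. rewrite HG'. destruct (HL _ Hd) as [H|H];
          apply in_app_iff; [left|right; right]; auto. }
    exists (renc (swapv x w) G'). split.
    + apply ren_wf; auto.
      * apply swapv_inj.
      * intros v; unfold swapv; repeat destruct excluded_middle_informative; subst; auto.
    + rewrite HG', renc_app, renc_cons, swapv_l.
      rewrite (Hfix G1) by (intros; auto). rewrite (Hfix G2) by (intros; auto).
      assert (HT2 : typT' vclass Ax Rl ((G1 ++ G2) ++ [(x, C)]) t A).
      { eapply perm_typ; [exact HT|]. rewrite HG'.
        eapply perm_trans; [symmetry; apply Permutation_middle|]. apply Permutation_cons_append. }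
      apply (weakening vclass Ax Rl Hinf _ _ _ w (ren (swapv x w) C)) in HT2.
      * eapply perm_typ; [exact HT2|].
        rewrite <- !app_assoc. apply Permutation_app_head. simpl.
        symmetry.
        replace (G2 ++ [(x, C); (w, ren (swapv x w) C)]) with ((G2 ++ [(x, C)]) ++ [(w, ren (swapv x w) C)]) by (rewrite <- app_assoc; reflexivity).
        apply Permutation_cons_append.
      * intro Ho. apply Hw2. eapply occurs_ctx_incl; [|exact Ho].
        intros d Hd. rewrite HG'. rewrite !in_app_iff in *. simpl in *.
        destruct Hd as [[Hd|Hd]|[Hd|[]]]; auto.
  - exists G'. split; auto.
    apply weakening; auto.
    intros [Ho|(y&B&H1&H2)]; [contradiction|].
    pose proof (Hincl _ H1) as H. apply in_app_iff in H. destruct H as [H|[H|[]]].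
    + apply Hx; right; exists y, B; auto.
    + injection H as Hq1 Hq2; subst y B. apply Hnin; unfold dom; apply in_map_iff; exists (x, C); auto.
Qed.
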